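(* In the setting of the context, consider a Case 2 spacetime ($\partial_v r_->0$). If there exist constants $\varepsilon_\pm>0$ such that $$\lim_{v\to\infty}x_+(v)\exp\left[\frac{h_c}{2}\left\{(1+\varepsilon_+)X_+(v)+(1-\varepsilon_-)X_-(v)\right\}\right]=0,$$ then the spacetime is of Type 1.
   Context: Spherically symmetric spacetime $ds^2=-f(v,r)A(v,r)^2dv^2+2A(v,r)\,dr\,dv+r^2d\Omega^2$ with $A>0$, $f,A\to1$ as $r\to\infty$, $f(v,0)=1$, $\partial_rf(v,0)=\partial_rA(v,0)=0$; $f(v,\cdot)$ has exactly two zeros $r_+(v)>r_-(v)$ (outer/inner apparent horizons, AHs), $f=F(r-r_+)(r-r_-)$ with $F>0$, and $h=AF>0$. Assumptions: $\partial_v r_+<0$; $r_\pm(v)\to r_c$ as $v\to\infty$; the sign of $\partial_v r_-$ is constant; the $v\to\infty$ limits of $A,F,h$ behave as analytic functions of $r$, so all $\partial_r^n h$ converge as $v\to\infty$; $h_c=\lim_{v\to\infty}h(v,r_c)$. With $x=r-r_c$, $x_\pm=r_\pm-r_c$ and $h$ regarded as a function of $(v,x)$, radially outgoing null geodesics solve $dx/dv=\tfrac12h(v,x)(x-x_+(v))(x-x_-(v))$. $X_\pm$ are primitives of $x_\pm$. Case 2 means $\partial_v r_->0$. In Case 2, Type 1 means that there is a unique outgoing null geodesic between the two AHs crossing neither AH (the event horizon) — equivalently, with the compactified outgoing null coordinate $U$ (constant along outgoing null geodesics) and $U^{(\pm)}_\infty=\lim_{v\to\infty}U^{(\pm)}(v)$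 the limiting $U$-values of the AHs, $U^{(+)}_\infty=U^{(-)}_\infty$; Type 2 means a set of positive measure of such geodesics exists ($U^{(+)}_\infty<U^{(-)}_\infty$). *)

(* Defs.v *)
From Stdlib Require Import Reals.
From Coquelicot Require Import Coquelicot.
Open Scope R_scope.

(* Radially outgoing null geodesic, written as x = r - r_c as a function of v:
   dx/dv = 1/2 h(v,x) (x - x_+(v)) (x - x_-(v)). *)
Definition outgoing_null_geodesic (h : R -> R -> R) (xp xm : R -> R)
  (g : R -> R) : Prop :=
  forall v : R, is_derive g v (1/2 * h v (g v) * (g v - xp v) * (g v - xm v)).

Definition between_AHs (xp xm g : R -> R) : Prop :=
  forall v : R, xm v < g v < xp v.

(* Type 1: there is a unique outgoing null geodesic between the two AHs that
   crosses neither AH (the event horizon). *)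
Definition type1 (h : R -> R -> R) (xp xm : R -> R) : Prop :=
  exists g : R -> R,
    outgoing_null_geodesic h xp xm g /\ between_AHs xp xm g /\
    forall g' : R -> R,
      outgoing_null_geodesic h xp xm g' -> between_AHs xp xm g' ->
      forall v, g' v = g v.

(* Main.v *)
Require Import Defs.
From Stdlib Require Import Reals Lra Psatz Classical ClassicalEpsilon Factorial Ranalysis5.
From Coquelicot Require Import Coquelicot.
Open Scope R_scope.


Lemma cont1_eps (f : R -> R) (s eps : R) : continuous f s -> 0 < eps ->
  exists d, 0 < d /\ forall u, Rabs (u - s) < d -> Rabs (f u - f s) < eps.
Proof.
  intros Hc He.
  assert (H := Hc (ball (f s) eps) (locally_ball (f s) (mkposreal eps He))).
  destruct H as [d Hd]. exists d. split. apply cond_pos.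
  intros u Hu. apply (Hd u Hu).
Qed.

Lemma cont2_eps (G : R -> R -> R) (v x eps : R) :
  continuous (fun p : R * R => G (fst p) (snd p)) (v, x) -> 0 < eps ->
  exists d, 0 < d /\ forall v' x', Rabs (v' - v) < d -> Rabs (x' - x) < d ->
    Rabs (G v' x' - G v x) < eps.
Proof.
  intros Hc He.
  assert (H := Hc (ball (G v x) eps) (locally_ball (G v x) (mkposreal eps He))).
  destruct H as [d Hd]. exists d. split. apply cond_pos.
  intros v' x' H1 H2. apply (Hd (v', x')). split; assumption.
Qed.

Lemma is_derive_cont (f : R -> R) x l : is_derive f x l -> continuous f x.
Proof. intros H. apply (ex_derive_continuous (V:=R_NormedModule)). exists l. exact H. Qed.

Lemma is_derive_cpt (f : R -> R) x l : is_derive f x l -> continuity_pt f x.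
Proof. intros H. apply continuity_pt_filterlim. apply (is_derive_cont f x l H). Qed.

Lemma nonincr (f df : R -> R) a b : a <= b ->
  (forall t, a <= t <= b -> is_derive f t (df t)) ->
  (forall t, a <= t <= b -> df t <= 0) -> f b <= f a.
Proof.
  intros Hab Hd Hs.
  destruct (MVT_gen f a b df) as [c [Hc Heq]].
  - intros x Hx. rewrite Rmin_left in Hx by lra. rewrite Rmax_right in Hx by lra.
    apply Hd. lra.
  - intros x Hx. rewrite Rmin_left in Hx by lra. rewrite Rmax_right in Hx by lra.
    apply (is_derive_cpt f x (df x)). apply Hd. lra.
  - rewrite Rmin_left in Hc by lra. rewrite Rmax_right in Hc by lra.
    assert (df c <= 0) by (apply Hs; lra). nra.
Qed.

Lemma nondecr (f df : R -> R) a b : a <= b ->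
  (forall t, a <= t <= b -> is_derive f t (df t)) ->
  (forall t, a <= t <= b -> 0 <= df t) -> f a <= f b.
Proof.
  intros Hab Hd Hs.
  assert (H := nonincr (fun t => - f t) (fun t => - df t) a b Hab).
  cut (- f b <= - f a). lra. apply H.
  - intros t Ht. apply (is_derive_opp f). apply Hd; auto.
  - intros t Ht. specialize (Hs t Ht). lra.
Qed.

Lemma gronwall (d dd : R -> R) (L a b : R) : 0 <= L -> a <= b ->
  (forall t, a <= t <= b -> is_derive d t (dd t)) ->
  (forall t, a <= t <= b -> Rabs (dd t) <= L * Rabs (d t)) ->
  (d b)^2 <= (d a)^2 * exp (2 * L * (b - a)) /\
  (d a)^2 <= (d b)^2 * exp (2 * L * (b - a)).
Proof.
  intros HL Hab Hd Hb.
  assert (Hk : forall t, a <= t <= b -> d t * dd t <= L * (d t)^2 /\ - (L * (d t)^2) <= d t * dd t).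
  { intros t Ht. specialize (Hb t Ht).
    assert (Rabs (d t * dd t) <= L * (d t)^2).
    { rewrite Rabs_mult. replace ((d t)^2) with (Rabs (d t) * Rabs (d t)).
      2:{ rewrite <- Rabs_mult. rewrite Rabs_right. ring. nra. }
      assert (0 <= Rabs (d t)) by apply Rabs_pos. nra. }
    split; apply Rabs_le_between in H; lra. }
  split.
  - assert (H := nonincr (fun t => (d t)^2 * exp (- (2 * L) * t))
      (fun t => (2 * d t * dd t - 2 * L * (d t)^2) * exp (- (2 * L) * t)) a b Hab).
    assert (Hf : (d b)^2 * exp (- (2 * L) * b) <= (d a)^2 * exp (- (2 * L) * a)).
    { apply H.
      - intros t Ht. specialize (Hd t Ht).
        auto_derive. exists (dd t). exact Hd.
        match goal with |- context [Derive ?g t] => replace (Derive g t) with (dd t) by (symmetry; apply is_derive_unique; exact Hd) end. ring.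
      - intros t Ht. destruct (Hk t Ht). assert (0 < exp (- (2 * L) * t)) by apply exp_pos. nra. }
    assert (E : exp (2 * L * (b - a)) = exp (- (2 * L) * a) * exp (2 * L * b)).
    { rewrite <- exp_plus. f_equal. ring. }
    assert (E2 : exp (- (2 * L) * b) * exp (2 * L * b) = 1).
    { rewrite <- exp_plus. replace (- (2 * L) * b + 2 * L * b) with 0 by ring. apply exp_0. }
    assert (0 < exp (2 * L * b)) by apply exp_pos.
    rewrite E. apply Rmult_le_compat_r with (r := exp (2 * L * b)) in Hf; [|lra].
    replace ((d b)^2) with ((d b)^2 * exp (- (2 * L) * b) * exp (2 * L * b)).
    2:{ rewrite Rmult_assoc, E2. ring. }
    lra.
  - assert (H := nondecr (fun t => (d t)^2 * exp ((2 * L) * t))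
      (fun t => (2 * d t * dd t + 2 * L * (d t)^2) * exp ((2 * L) * t)) a b Hab).
    assert (Hf : (d a)^2 * exp ((2 * L) * a) <= (d b)^2 * exp ((2 * L) * b)).
    { apply H.
      - intros t Ht. specialize (Hd t Ht).
        auto_derive. exists (dd t). exact Hd.
        match goal with |- context [Derive ?g t] => replace (Derive g t) with (dd t) by (symmetry; apply is_derive_unique; exact Hd) end. ring.
      - intros t Ht. destruct (Hk t Ht). assert (0 < exp ((2 * L) * t)) by apply exp_pos. nra. }
    assert (E : exp ((2 * L) * b) = exp ((2 * L) * a) * exp (2 * L * (b - a))).
    { rewrite <- exp_plus. f_equal. ring. }
    rewrite E in Hf. assert (0 < exp ((2 * L) * a)) by apply exp_pos.
    apply Rmult_le_reg_r with (r := exp ((2 * L) * a)). lra. nra.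
Qed.

Ltac rwD H := let K := fresh "K" in pose proof H as K;
  match type of K with is_derive _ ?t ?l =>
    match goal with |- context [Derive ?g t] =>
      replace (Derive g t) with l by (symmetry; apply is_derive_unique; exact K) end end;
  clear K.


Lemma not_ub_exists (E : R -> Prop) (s r : R) : is_lub E s -> r < s ->
  exists t, E t /\ r < t.
Proof.
  intros [Hub Hl] Hr. apply NNPP. intros Hn.
  assert (is_upper_bound E r).
  { intros t Et. destruct (Rle_dec t r) as [|Hlt]; auto. exfalso. apply Hn. exists t. split; auto. lra. }
  specialize (Hl r H). lra.
Qed.

Lemma cover (c d : R) (A : R -> R -> R -> Prop) : c <= d ->
  (forall e e' B B' y, 0 < e' -> e' <= e -> B <= B' -> A e B y -> A e' B' y) ->
  (forall x, c <= x <= d -> exists r, 0 < r /\ exists e, 0 < e /\ exists B,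
       forall y, Rabs (y - x) < r -> A e B y) ->
  exists e, 0 < e /\ exists B, forall y, c <= y <= d -> A e B y.
Proof.
  intros Hcd Hmono Hloc.
  set (E := fun t => c <= t <= d /\ exists e, 0 < e /\ exists B, forall y, c <= y <= t -> A e B y).
  assert (Ec : E c).
  { split. lra. destruct (Hloc c) as [r [Hr [e [He [B HB]]]]]. lra.
    exists e. split; auto. exists B. intros y Hy. apply HB.
    replace (y - c) with 0 by lra. rewrite Rabs_R0. lra. }
  assert (Hb : bound E). { exists d. intros t [Ht _]. lra. }
  destruct (completeness E Hb (ex_intro _ c Ec)) as [s Hs].
  assert (Hcs : c <= s) by (apply (proj1 Hs); exact Ec).
  assert (Hsd : s <= d) by (apply (proj2 Hs); intros t [Ht _]; lra).
  destruct (Hloc s (conj Hcs Hsd)) as [r [Hr [e0 [He0 [B0 HB0]]]]].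
  destruct (not_ub_exists E s (s - r/2) Hs) as [t [[Ht [e1 [He1 [B1 HB1]]]] Hts]]. lra.
  set (t1 := Rmin (s + r/2) d).
  assert (Et1 : E t1).
  { split. unfold t1. split. apply Rmin_glb; lra. apply Rmin_r.
    exists (Rmin e0 e1). split. apply Rmin_glb_lt; auto.
    exists (Rmax B0 B1). intros y Hy.
    destruct (Rle_dec y t) as [Hyt|Hyt].
    - apply (Hmono e1 _ B1). apply Rmin_glb_lt; auto. apply Rmin_r. apply Rmax_r.
      apply HB1. lra.
    - apply (Hmono e0 _ B0). apply Rmin_glb_lt; auto. apply Rmin_l. apply Rmax_l.
      apply HB0. assert (t1 <= s + r/2) by apply Rmin_l.
      assert (t <= s) by (apply (proj1 Hs); split; [lra| exists e1; split; auto; exists B1; auto]).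
      apply Rabs_def1; lra. }
  assert (Ht1s : t1 <= s) by (apply (proj1 Hs); exact Et1).
  assert (t1 = d).
  { unfold t1 in *. destruct (Rle_dec (s + r/2) d).
    rewrite Rmin_left in Ht1s by lra. lra. rewrite Rmin_right by lra. reflexivity. }
  destruct Et1 as [_ [e [He [B HB]]]]. exists e. split; auto. exists B.
  intros y Hy. apply HB. lra.
Qed.

Lemma box_bound (G : R -> R -> R) a b c d : a <= b -> c <= d ->
  (forall v x, a <= v <= b -> c <= x <= d ->
     continuous (fun p : R * R => G (fst p) (snd p)) (v, x)) ->
  exists B, forall v x, a <= v <= b -> c <= x <= d -> Rabs (G v x) <= B.
Proof.
  intros Hab Hcd Hc.
  destruct (cover a b (fun e B v => forall x, c <= x <= d -> Rabs (G v x) <= B) Hab)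
    as [e [He [B HB]]].
  - intros e e' B B' y _ _ HBB H x Hx. specialize (H x Hx). lra.
  - intros t Ht.
    destruct (cover c d (fun e B x => forall v, Rabs (v - t) < e -> Rabs (G v x) <= B) Hcd)
      as [e [He [B HB]]].
    + intros e e' B B' y He' Hee HBB H v Hv. specialize (H v ltac:(lra)). lra.
    + intros x Hx. destruct (cont2_eps G t x 1 (Hc t x Ht Hx) Rlt_0_1) as [dl [Hdl Hd]].
      exists dl. split; auto. exists dl. split; auto. exists (Rabs (G t x) + 1).
      intros y Hy v Hv. specialize (Hd v y Hv Hy).
      assert (Rabs (G v y) - Rabs (G t x) <= Rabs (G v y - G t x)) by apply Rabs_triang_inv.
      lra.
    + exists e. split; auto. exists e. split; auto. exists B. intros y Hy x Hx. apply HB; auto.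
  - exists B. intros v x Hv Hx. apply (HB v Hv x Hx).
Qed.

Lemma line_bound (f : R -> R) c d : c <= d ->
  (forall x, c <= x <= d -> continuous f x) ->
  exists B, forall x, c <= x <= d -> Rabs (f x) <= B.
Proof.
  intros Hcd Hc.
  destruct (cover c d (fun e B x => Rabs (f x) <= B) Hcd) as [e [He [B HB]]].
  - intros e e' B B' y _ _ HBB H. lra.
  - intros x Hx. destruct (cont1_eps f x 1 (Hc x Hx) Rlt_0_1) as [dl [Hdl Hd]].
    exists dl. split; auto. exists 1. split. lra. exists (Rabs (f x) + 1).
    intros y Hy. specialize (Hd y Hy).
    assert (Rabs (f y) - Rabs (f x) <= Rabs (f y - f x)) by apply Rabs_triang_inv. lra.
  - exists B. exact HB.
Qed.

Lemma deriv_pos_local (f : R -> R) s l : is_derive f s l -> 0 < l ->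
  exists dl, 0 < dl /\ (forall u, s < u < s + dl -> f s < f u) /\
                       (forall u, s - dl < u < s -> f u < f s).
Proof.
  intros Hd Hl. apply is_derive_Reals in Hd.
  destruct (Hd (l/2) ltac:(lra)) as [dl Hdl].
  exists dl. split. apply cond_pos. split.
  - intros u Hu. specialize (Hdl (u - s) ltac:(lra)).
    assert (Rabs (u - s) < dl) by (rewrite Rabs_right; lra).
    specialize (Hdl H). replace (s + (u - s)) with u in Hdl by ring.
    apply Rabs_def2 in Hdl. destruct Hdl as [_ H2].
    set (q := (f u - f s) / (u - s)) in *.
    assert (f u - f s = q * (u - s)) by (unfold q; field; lra). nra.
  - intros u Hu. specialize (Hdl (u - s) ltac:(lra)).
    assert (Rabs (u - s) < dl) by (rewrite Rabs_left; lra).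
    specialize (Hdl H). replace (s + (u - s)) with u in Hdl by ring.
    apply Rabs_def2 in Hdl. destruct Hdl as [_ H2].
    set (q := (f u - f s) / (u - s)) in *.
    assert (f u - f s = q * (u - s)) by (unfold q; field; lra). nra.
Qed.

Lemma barrier (phi dphi : R -> R) a b :
  (forall t, is_derive phi t (dphi t)) -> (forall t, 0 <= phi t -> 0 < dphi t) ->
  a < b -> 0 <= phi a -> 0 < phi b.
Proof.
  intros Hd Hp Hab Ha.
  set (E := fun t => a <= t <= b /\ forall u, a < u <= t -> 0 < phi u).
  assert (Ea : E a) by (split; [lra| intros u Hu; lra]).
  assert (Hb : bound E) by (exists b; intros t [Ht _]; lra).
  destruct (completeness E Hb (ex_intro _ a Ea)) as [s Hs].
  assert (Has : a <= s) by (apply (proj1 Hs); exact Ea).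
  assert (Hsb : s <= b) by (apply (proj2 Hs); intros t [Ht _]; lra).
  assert (C1 : forall u, a < u < s -> 0 < phi u).
  { intros u Hu. destruct (not_ub_exists E s u Hs) as [t [[_ Ht] Hut]]. lra. apply Ht. lra. }
  assert (C2 : 0 <= phi s).
  { destruct (Req_dec s a) as [->|Hne]; auto.
    destruct (Rle_dec 0 (phi s)) as [|Hn]; auto. exfalso.
    destruct (cont1_eps phi s (- phi s) (is_derive_cont _ _ _ (Hd s)) ltac:(lra)) as [dl [Hdl Hc]].
    set (u := Rmax ((a + s)/2) (s - dl/2)).
    assert (a < u < s). { unfold u. split. apply Rlt_le_trans with ((a+s)/2). lra. apply Rmax_l.
      apply Rmax_lub_lt; lra. }
    assert (s - dl/2 <= u) by apply Rmax_r.
    specialize (Hc u ltac:(apply Rabs_def1; lra)). specialize (C1 u H).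
    apply Rabs_def2 in Hc. lra. }
  destruct (deriv_pos_local phi s (dphi s) (Hd s) (Hp s C2)) as [dl [Hdl [Hr Hl]]].
  assert (C3 : a < s -> 0 < phi s).
  { intros Has'. destruct (Req_dec (phi s) 0) as [Hz|]; [|lra]. exfalso.
    set (u := Rmax ((a + s)/2) (s - dl/2)).
    assert (a < u < s). { unfold u. split. apply Rlt_le_trans with ((a+s)/2). lra. apply Rmax_l.
      apply Rmax_lub_lt; lra. }
    assert (s - dl/2 <= u) by apply Rmax_r.
    specialize (Hl u ltac:(lra)). specialize (C1 u H). lra. }
  assert (C4 : s = b).
  { destruct (Req_dec s b) as [|Hne]; auto. exfalso.
    set (u1 := Rmin (s + dl/2) b).
    assert (s < u1) by (unfold u1; apply Rmin_glb_lt; lra).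
    assert (u1 <= s + dl/2) by apply Rmin_l. assert (u1 <= b) by apply Rmin_r.
    assert (E u1).
    { split. lra. intros u Hu.
      destruct (Rlt_le_dec u s). apply C1; lra.
      destruct (Req_dec u s) as [->|]. apply C3; lra.
      assert (phi s < phi u) by (apply Hr; lra). lra. }
    assert (u1 <= s) by (apply (proj1 Hs); auto). lra. }
  subst s. apply C3. lra.
Qed.


Lemma poly_bound_pos (f df : R -> R) C n v : 0 <= C -> 0 <= v -> f 0 = 0 ->
  (forall s, 0 <= s <= v -> is_derive f s (df s)) ->
  (forall s, 0 <= s <= v -> Rabs (df s) <= C * s ^ n) ->
  Rabs (f v) <= C * v ^ (S n) / INR (S n).
Proof.
  intros HC Hv Hf0 Hd Hb.
  assert (HS : 0 < INR (S n)) by (apply lt_0_INR; lia).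
  assert (Hder : forall s, is_derive (fun s => s ^ (S n) / INR (S n)) s (s ^ n)).
  { intros s. auto_derive. auto.
    change (match n with | 0%nat => 1 | S _ => INR n + 1 end) with (INR (S n)). field. lra. }
  assert (H1 := nonincr (fun s => f s - C * (s ^ (S n) / INR (S n))) (fun s => df s - C * s ^ n) 0 v Hv).
  assert (H2 := nondecr (fun s => f s + C * (s ^ (S n) / INR (S n))) (fun s => df s + C * s ^ n) 0 v Hv).
  assert (A : f v - C * (v ^ (S n) / INR (S n)) <= f 0 - C * (0 ^ (S n) / INR (S n))).
  { apply H1.
    - intros t Ht. apply (is_derive_minus f). apply Hd; auto.
      apply (is_derive_scal (fun s => s ^ (S n) / INR (S n))). apply Hder.
    - intros t Ht. specialize (Hb t Ht). apply Rabs_le_between in Hb. lra. }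
  assert (B : f 0 + C * (0 ^ (S n) / INR (S n)) <= f v + C * (v ^ (S n) / INR (S n))).
  { apply H2.
    - intros t Ht. apply (is_derive_plus f). apply Hd; auto.
      apply (is_derive_scal (fun s => s ^ (S n) / INR (S n))). apply Hder.
    - intros t Ht. specialize (Hb t Ht). apply Rabs_le_between in Hb. lra. }
  rewrite pow_ne_zero in A, B by lia. rewrite Hf0 in A, B.
  apply Rabs_le. unfold Rdiv in *. lra.
Qed.

Lemma poly_bound (f df : R -> R) C n v : 0 <= C -> f 0 = 0 ->
  (forall s, is_derive f s (df s)) ->
  (forall s, Rabs s <= Rabs v -> Rabs (df s) <= C * (Rabs s) ^ n) ->
  Rabs (f v) <= C * (Rabs v) ^ (S n) / INR (S n).
Proof.
  intros HC Hf0 Hd Hb.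
  destruct (Rle_dec 0 v) as [Hv|Hv].
  - rewrite (Rabs_right v) by lra. apply poly_bound_pos with df; auto.
    intros s Hs. replace (s ^ n) with (Rabs s ^ n) by (rewrite Rabs_right; lra). apply Hb. rewrite !Rabs_right; lra.
  - rewrite (Rabs_left v) by lra.
    rewrite <- (Ropp_involutive v) at 1. change (f (- - v)) with ((fun s => f (- s)) (- v)).
    apply poly_bound_pos with (fun s => - df (- s)); auto. lra. simpl. rewrite Ropp_0. auto.
    + intros s Hs. auto_derive. exists (df (- s)). apply Hd.
      rwD (Hd (- s)). ring.
    + intros s Hs. rewrite Rabs_Ropp. replace (s ^ n) with (Rabs (- s) ^ n) by (rewrite Rabs_Ropp, Rabs_right; lra).
      apply Hb. rewrite Rabs_Ropp. rewrite (Rabs_left v) by lra. rewrite Rabs_right; lra.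
Qed.


Fixpoint picit (G : R -> R -> R) (y0 : R) (k : nat) : R -> R :=
  match k with
  | O => fun _ => y0
  | S k => fun v => y0 + RInt (fun s => G s (picit G y0 k s)) 0 v
  end.

Lemma rint_deriv (f : R -> R) y0 v : (forall s, continuous f s) ->
  is_derive (fun v => y0 + RInt f 0 v) v (f v).
Proof.
  intros Hc.
  replace (f v) with (0 + f v) by ring.
  apply (is_derive_plus (fun _ => y0) (fun v => RInt f 0 v)).
  exact (is_derive_const (K:=R_AbsRing) (V:=R_NormedModule) y0 v).
  apply (is_derive_RInt f (fun v => RInt f 0 v) 0 v).
  - apply filter_forall. intros b. apply (RInt_correct f 0 b).
    apply ex_RInt_continuous. intros z _. apply Hc.
  - apply Hc.
Qed.

Lemma eq_by_eps a b : (forall eps, 0 < eps -> Rabs (a - b) <= eps) -> a = b.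
Proof.
  intros H. destruct (Req_dec a b) as [|Hne]; auto. exfalso.
  assert (0 < Rabs (a - b)) by (apply Rabs_pos_lt; lra).
  specialize (H (Rabs (a - b) / 2) ltac:(lra)). lra.
Qed.

Lemma le_by_eps a b : (forall eps, 0 < eps -> a <= b + eps) -> a <= b.
Proof.
  intros H. destruct (Rle_dec a b) as [|Hn]; auto. exfalso.
  specialize (H ((a - b) / 2) ltac:(lra)). lra.
Qed.

Fixpoint sumfrom (a : nat -> R) (n j : nat) : R :=
  match j with O => 0 | S j => sumfrom a n j + a (n + j)%nat end.

Lemma picard (G : R -> R -> R) (y0 : R) :
  (forall phi : R -> R, (forall s, continuous phi s) ->
     forall s, continuous (fun s => G s (phi s)) s) ->
  (forall N, 0 <= N -> exists M L, 0 <= M /\ 0 <= L /\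
     forall v, Rabs v <= N -> forall x y,
       Rabs (G v x) <= M /\ Rabs (G v x - G v y) <= L * Rabs (x - y)) ->
  exists phi : R -> R, phi 0 = y0 /\ forall v, is_derive phi v (G v (phi v)).
Proof.
  intros Hc Hb.
  set (P := picit G y0).
  assert (HP : forall k, (forall s, continuous (P k) s) /\
                 (forall v, is_derive (P (S k)) v (G v (P k v)))).
  { induction k as [|k [IH1 IH2]].
    - split.
      + intros s. apply continuous_const.
      + intros v. apply (rint_deriv (fun s => G s y0)). apply (Hc (fun _ => y0)).
        intros; apply continuous_const.
    - assert (C : forall s, continuous (P (S k)) s).
      { intros s. apply (is_derive_cont _ _ _ (IH2 s)). }
      split. exact C.
      intros v. apply (rint_deriv (fun s => G s (P (S k) s))). apply Hc. exact C. }
  assert (HPz : forall k, P k 0 = y0).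
  { intros [|k]. reflexivity. unfold P; simpl. rewrite RInt_point. unfold zero; simpl. ring. }
  assert (HU : forall N, 0 <= N -> forall eps, 0 < eps -> exists K, forall n j v,
            (K <= n)%nat -> Rabs v <= N -> Rabs (P (n + j)%nat v - P n v) <= eps).
  { intros N HN eps Heps.
    destruct (Hb N HN) as [M [L [HM [HL HML]]]].
    set (a := fun k => M * L ^ k * N ^ (S k) / INR (fact (S k))).
    assert (Hfact : forall k, 0 < INR (fact k)) by (intros; apply lt_0_INR, lt_O_fact).
    assert (Ha0 : forall k, 0 <= a k).
    { intros k. unfold a. apply Rmult_le_pos. apply Rmult_le_pos. apply Rmult_le_pos; auto.
      apply pow_le; auto. apply pow_le; auto. left. apply Rinv_0_lt_compat. apply Hfact. }
    assert (Hd : forall k v, Rabs v <= N ->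
               Rabs (P (S k) v - P k v) <= M * L ^ k * (Rabs v) ^ (S k) / INR (fact (S k))).
    { intros k. induction k as [|k IH]; intros v Hv.
      - change (fact 1) with 1%nat. rewrite pow_O, Rmult_1_r.
        apply (poly_bound (fun v => P 1%nat v - P 0%nat v) (fun s => G s y0 - 0) M 0 v HM).
        + rewrite !HPz. ring.
        + intros s. apply (is_derive_minus (P 1%nat) (P 0%nat)). apply (proj2 (HP 0%nat)).
          exact (is_derive_const (K:=R_AbsRing) (V:=R_NormedModule) y0 s).
        + intros s Hs. rewrite Rminus_0_r. simpl. rewrite Rmult_1_r.
          apply (HML s ltac:(lra) y0 y0).
      - replace (M * L ^ S k * Rabs v ^ S (S k) / INR (fact (S (S k)))) with
          ((M * L ^ S k / INR (fact (S k))) * Rabs v ^ S (S k) / INR (S (S k))).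
        2:{ rewrite (fact_simpl (S k)), mult_INR. field. split.
            apply Rgt_not_eq, Hfact. apply Rgt_not_eq, lt_0_INR. lia. }
        apply (poly_bound (fun v => P (S (S k)) v - P (S k) v)
                 (fun s => G s (P (S k) s) - G s (P k s))).
        + unfold Rdiv. apply Rmult_le_pos. apply Rmult_le_pos; auto. apply pow_le; auto.
          left. apply Rinv_0_lt_compat. apply Hfact.
        + rewrite !HPz. ring.
        + intros s. apply (is_derive_minus (P (S (S k))) (P (S k))); apply (proj2 (HP _)).
        + intros s Hs. assert (Hs' : Rabs s <= N) by lra.
          destruct (HML s Hs' (P (S k) s) (P k s)) as [_ H2].
          specialize (IH s Hs').
          apply Rle_trans with (1 := H2).
          replace (M * L ^ S k / INR (fact (S k)) * Rabs s ^ S k) with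
            (L * (M * L ^ k * Rabs s ^ S k / INR (fact (S k)))) by (rewrite <- (tech_pow_Rmult L k); field; apply Rgt_not_eq, Hfact).
          apply Rmult_le_compat_l; auto. }
    assert (Hd' : forall k v, Rabs v <= N -> Rabs (P (S k) v - P k v) <= a k).
    { intros k v Hv. apply Rle_trans with (1 := Hd k v Hv). unfold a.
      unfold Rdiv. apply Rmult_le_compat_r. left. apply Rinv_0_lt_compat. apply Hfact.
      apply Rmult_le_compat_l. apply Rmult_le_pos; auto. apply pow_le; auto.
      apply pow_incr. split; auto. apply Rabs_pos. }
    assert (Hsum : forall n j v, Rabs v <= N -> Rabs (P (n + j)%nat v - P n v) <= sumfrom a n j).
    { intros n j v Hv. induction j as [|j IH].
      - simpl. rewrite Nat.add_0_r. unfold Rminus. rewrite Rplus_opp_r, Rabs_R0. lra.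
      - simpl. replace (P (n + S j)%nat v - P n v) with
          ((P (S (n + j)) v - P (n + j)%nat v) + (P (n + j)%nat v - P n v))
          by (rewrite Nat.add_succ_r; ring).
        apply Rle_trans with (1 := Rabs_triang _ _).
        specialize (Hd' (n + j)%nat v Hv). lra. }
    destruct (INR_unbounded (2 * L * N)) as [K0 HK0].
    assert (Hstep : forall k, (K0 <= k)%nat -> a (S k) <= a k / 2).
    { intros k Hk. unfold a.
      replace (M * L ^ S k * N ^ S (S k) / INR (fact (S (S k)))) with
        ((M * L ^ k * N ^ S k / INR (fact (S k))) * (L * N / INR (S (S k)))).
      2:{ rewrite (fact_simpl (S k)), mult_INR. rewrite <- (tech_pow_Rmult L k), <- (tech_pow_Rmult N (S k)). field. split.
          apply Rgt_not_eq, Hfact. apply Rgt_not_eq, lt_0_INR. lia. }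
      assert (INR K0 <= INR k) by (apply le_INR; auto).
      assert (HS : INR (S (S k)) = INR k + 2) by (rewrite !S_INR; ring).
      assert (L * N / INR (S (S k)) <= / 2).
      { assert (0 <= INR k) by apply pos_INR. rewrite HS. apply Rmult_le_reg_r with (INR k + 2). lra.
        unfold Rdiv. rewrite Rmult_assoc, Rinv_l by lra. lra. }
      assert (0 <= M * L ^ k * N ^ S k / INR (fact (S k))) by apply (Ha0 k).
      unfold Rdiv at 2. apply Rmult_le_compat_l; auto. }
    assert (Htail : forall n j, (K0 <= n)%nat -> sumfrom a n j + 2 * a (n + j)%nat <= 2 * a n).
    { intros n j Hn. induction j as [|j IH].
      - simpl. rewrite Nat.add_0_r. lra.
      - simpl. rewrite Nat.add_succ_r. specialize (Hstep (n + j)%nat ltac:(lia)). lra. }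
    destruct (cv_speed_pow_fact (L * N) (eps / (2 * (M * N + 1))) ltac:(apply Rdiv_lt_0_compat; nra))
      as [K1 HK1].
    exists (max K0 K1). intros n j v Hn Hv.
    apply Rle_trans with (1 := Hsum n j v Hv).
    specialize (Htail n j ltac:(lia)). specialize (Ha0 (n + j)%nat).
    assert (a n <= eps / 2).
    { specialize (HK1 n ltac:(lia)). unfold Rdist in HK1. rewrite Rminus_0_r in HK1.
      assert (Hpos : 0 <= (L * N) ^ n / INR (fact n)).
      { apply Rmult_le_pos. apply pow_le. nra. left; apply Rinv_0_lt_compat, Hfact. }
      rewrite Rabs_right in HK1 by lra.
      unfold a. rewrite Rpow_mult_distr in HK1.
      assert (INR (fact n) <= INR (fact (S n))).
      { apply le_INR. rewrite fact_simpl. lia. }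
      assert (E1 : M * L ^ n * N ^ S n / INR (fact (S n)) <= (M * N) * ((L ^ n * N ^ n) / INR (fact n))).
      { rewrite <- (tech_pow_Rmult N n). unfold Rdiv.
        replace (M * L ^ n * (N * N ^ n) * / INR (fact (S n))) with
          ((M * N) * (L ^ n * N ^ n) * / INR (fact (S n))) by ring.
        rewrite Rmult_assoc. apply Rmult_le_compat_l. nra.
        apply Rmult_le_compat_l. apply Rmult_le_pos; apply pow_le; auto.
        apply Rinv_le_contravar; auto. }
      rewrite <- Rpow_mult_distr in E1.
      assert ((M * N) * ((L * N) ^ n / INR (fact n)) <= (M * N + 1) * (eps / (2 * (M * N + 1)))).
      { apply Rmult_le_compat; [apply Rmult_le_pos; auto | exact Hpos | lra | rewrite Rpow_mult_distr; lra]. }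
      replace ((M * N + 1) * (eps / (2 * (M * N + 1)))) with (eps / 2) in H0 by (field; nra).
      lra. }
    lra. }
  assert (Hcauchy : forall v, Cauchy_crit (fun k => P k v)).
  { intros v eps Heps. destruct (HU (Rabs v) (Rabs_pos v) (eps / 2) ltac:(lra)) as [K HK].
    exists K. intros n m Hn Hm. unfold Rdist.
    destruct (Nat.le_ge_cases n m) as [Hnm|Hnm].
    - replace m with (n + (m - n))%nat by lia. specialize (HK n (m - n)%nat v Hn (Rle_refl _)).
      rewrite Rabs_minus_sym. lra.
    - replace n with (m + (n - m))%nat by lia. specialize (HK m (n - m)%nat v Hm (Rle_refl _)).
      lra. }
  set (phi := fun v => proj1_sig (Rcomplete.R_complete _ (Hcauchy v))).
  assert (Hphi : forall v, Un_cv (fun k => P k v) (phi v)).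
  { intros v. unfold phi. destruct (Rcomplete.R_complete _ (Hcauchy v)) as [l Hl]. exact Hl. }
  assert (Hunif : forall N, 0 <= N -> forall eps, 0 < eps -> exists K, forall n v,
            (K <= n)%nat -> Rabs v <= N -> Rabs (phi v - P n v) <= eps).
  { intros N HN eps Heps. destruct (HU N HN eps Heps) as [K HK]. exists K.
    intros n v Hn Hv. apply le_by_eps. intros e He.
    destruct (Hphi v e He) as [K2 HK2].
    specialize (HK2 (n + K2)%nat ltac:(lia)). unfold Rdist in HK2.
    specialize (HK n K2 v Hn Hv).
    replace (phi v - P n v) with ((P (n + K2)%nat v - P n v) - (P (n + K2)%nat v - phi v)) by ring.
    apply Rle_trans with (1 := Rabs_triang _ _). rewrite Rabs_Ropp. lra. }
  assert (Hphi0 : phi 0 = y0).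
  { apply eq_by_eps. intros e He. destruct (Hunif 0 (Rle_refl 0) e He) as [K HK].
    specialize (HK K 0 (Nat.le_refl K) ltac:(rewrite Rabs_R0; lra)). rewrite HPz in HK. exact HK. }
  assert (Hpcont : forall s, continuous phi s).
  { intros s. apply continuity_pt_filterlim.
    assert (Hr : 0 < Rabs s + 1) by (generalize (Rabs_pos s); lra).
    apply (CVU_continuity P phi 0 (mkposreal _ Hr)).
    - intros eps Heps. destruct (Hunif (Rabs s + 1) ltac:(lra) (eps / 2) ltac:(lra)) as [K HK].
      exists K. intros n y Hn Hy. unfold Boule in Hy. simpl in Hy. rewrite Rminus_0_r in Hy.
      specialize (HK n y Hn ltac:(lra)). lra.
    - intros n y _. apply continuity_pt_filterlim. apply (proj1 (HP n)).
    - unfold Boule. simpl. rewrite Rminus_0_r. lra. }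
  exists phi. split. exact Hphi0.
  intros v. apply is_derive_Reals.
  assert (Hr : 0 < Rabs v + 1) by (generalize (Rabs_pos v); lra).
  destruct (Hb (Rabs v + 1) ltac:(lra)) as [M [L [HM [HL HML]]]].
  apply (derivable_pt_lim_CVU (fun n => P (S n)) (fun n y => G y (P n y)) phi
           (fun y => G y (phi y)) v 0 (mkposreal _ Hr)).
  - unfold Boule. simpl. rewrite Rminus_0_r. lra.
  - intros y n _. apply is_derive_Reals. apply (proj2 (HP n)).
  - intros y Hy. unfold Boule in Hy. simpl in Hy. rewrite Rminus_0_r in Hy.
    intros eps Heps. destruct (Hunif (Rabs v + 1) ltac:(lra) (eps / 2) ltac:(lra)) as [K HK].
    exists K. intros n Hn. unfold Rdist. specialize (HK (S n) y ltac:(lia) ltac:(lra)).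
    rewrite Rabs_minus_sym. lra.
  - intros eps Heps.
    destruct (Hunif (Rabs v + 1) ltac:(lra) (eps / (2 * (L + 1))) ltac:(apply Rdiv_lt_0_compat; lra)) as [K HK].
    exists K. intros n y Hn Hy. unfold Boule in Hy. simpl in Hy. rewrite Rminus_0_r in Hy.
    specialize (HK n y Hn ltac:(lra)).
    destruct (HML y ltac:(lra) (phi y) (P n y)) as [_ H2].
    apply Rle_lt_trans with (1 := H2).
    apply Rle_lt_trans with (L * (eps / (2 * (L + 1)))). apply Rmult_le_compat_l; auto.
    apply Rmult_lt_reg_r with (2 * (L + 1)). lra.
    replace (L * (eps / (2 * (L + 1))) * (2 * (L + 1))) with (L * eps) by (field; lra). nra.
  - intros y _. apply continuity_pt_filterlim. apply (Hc phi Hpcont y).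
Qed.


Definition clamp (xp xm : R -> R) (v x : R) : R := Rmax (xm v) (Rmin (xp v) x).
Definition Ft (h : R -> R -> R) (xp xm : R -> R) (v x : R) : R :=
  1/2 * h v (clamp xp xm v x) * (clamp xp xm v x - xp v) * (clamp xp xm v x - xm v).

Lemma clamp_in xp xm v x : xm v <= xp v ->
  xm v <= clamp xp xm v x <= xp v.
Proof. intros H. unfold clamp, Rmax, Rmin.
  destruct (Rle_dec (xp v) x); destruct (Rle_dec (xm v) _); lra. Qed.

Lemma clamp_id xp xm v x : xm v <= x <= xp v -> clamp xp xm v x = x.
Proof. intros H. unfold clamp, Rmax, Rmin.
  destruct (Rle_dec (xp v) x); destruct (Rle_dec (xm v) _); lra. Qed.

Lemma clamp_hi xp xm v x : xm v <= xp v -> xp v <= x -> clamp xp xm v x = xp v.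
Proof. intros H1 H2. unfold clamp, Rmax, Rmin.
  destruct (Rle_dec (xp v) x); destruct (Rle_dec (xm v) _); lra. Qed.

Lemma clamp_lo xp xm v x : xm v <= xp v -> x <= xm v -> clamp xp xm v x = xm v.
Proof. intros H1 H2. unfold clamp, Rmax, Rmin.
  destruct (Rle_dec (xp v) x); destruct (Rle_dec (xm v) _); lra. Qed.

Lemma clamp_lip xp xm v x y : xm v <= xp v ->
  Rabs (clamp xp xm v x - clamp xp xm v y) <= Rabs (x - y).
Proof. intros H. unfold clamp, Rmax, Rmin.
  assert (K := proj1 (Rabs_le_between (x - y) (Rabs (x - y))) (Rle_refl _)).
  destruct (Rle_dec (xp v) x); destruct (Rle_dec (xp v) y);
  repeat match goal with |- context [Rle_dec ?a ?b] => destruct (Rle_dec a b) end;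
  apply Rabs_le; lra.
Qed.

Lemma cont_Rmax (f g : R -> R) s : continuous f s -> continuous g s ->
  continuous (fun s => Rmax (f s) (g s)) s.
Proof.
  intros Hf Hg. apply continuity_pt_filterlim. apply continuity_pt_filterlim in Hf, Hg.
  apply continuity_pt_ext with (fun s => (f s + g s + Rabs (f s - g s)) * / 2).
  { intros x. unfold Rmax. destruct (Rle_dec (f x) (g x)).
    rewrite Rabs_left1 by lra. field. rewrite Rabs_right by lra. field. }
  apply continuity_pt_mult. apply continuity_pt_plus. apply continuity_pt_plus; auto.
  apply (continuity_pt_comp (fun s => f s - g s) Rabs). apply continuity_pt_minus; auto.
  apply Rcontinuity_abs. apply continuity_pt_const. intros a b; reflexivity.
Qed.

Lemma cont_Rmin (f g : R -> R) s : continuous f s -> continuous g s ->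
  continuous (fun s => Rmin (f s) (g s)) s.
Proof.
  intros Hf Hg. apply continuity_pt_filterlim. apply continuity_pt_filterlim in Hf, Hg.
  apply continuity_pt_ext with (fun s => (f s + g s - Rabs (f s - g s)) * / 2).
  { intros x. unfold Rmin. destruct (Rle_dec (f x) (g x)).
    rewrite Rabs_left1 by lra. field. rewrite Rabs_right by lra. field. }
  apply continuity_pt_mult. apply continuity_pt_minus. apply continuity_pt_plus; auto.
  apply (continuity_pt_comp (fun s => f s - g s) Rabs). apply continuity_pt_minus; auto.
  apply Rcontinuity_abs. apply continuity_pt_const. intros a b; reflexivity.
Qed.

Lemma F_diff_bound (hp hq p q xp xm K B0 B1 : R) :
  xm <= p <= xp -> xm <= q <= xp -> xp - xm <= K -> Rabs hp <= B0 ->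
  Rabs (hp - hq) <= B1 * Rabs (p - q) -> 0 <= B1 ->
  Rabs (1/2 * hp * (p - xp) * (p - xm) - 1/2 * hq * (q - xp) * (q - xm))
    <= 1/2 * (B0 * 2 * K + B1 * K * K) * Rabs (p - q).
Proof.
  intros Hp Hq HK HB0 HB1 HB1p.
  replace (1/2 * hp * (p - xp) * (p - xm) - 1/2 * hq * (q - xp) * (q - xm)) with
    (1/2 * (hp * (p - q) * ((p - xp) + (q - xm)) + (hp - hq) * ((q - xp) * (q - xm)))) by ring.
  replace (1/2 * (B0 * 2 * K + B1 * K * K) * Rabs (p - q)) with (1/2 * ((B0 * 2 * K + B1 * K * K) * Rabs (p - q))) by ring.
  rewrite Rabs_mult, (Rabs_right (1/2)) by lra.
  apply Rmult_le_compat_l. lra.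
  apply Rle_trans with (1 := Rabs_triang _ _).
  rewrite !Rabs_mult.
  assert (A1 : Rabs ((p - xp) + (q - xm)) <= 2 * K).
  { apply Rabs_le. lra. }
  assert (A2 : Rabs (q - xp) <= K) by (apply Rabs_le; lra).
  assert (A3 : Rabs (q - xm) <= K) by (apply Rabs_le; lra).
  assert (P1 := Rabs_pos hp). assert (P2 := Rabs_pos (p - q)).
  assert (P3 := Rabs_pos ((p - xp) + (q - xm))). assert (P4 := Rabs_pos (q - xp)).
  assert (P5 := Rabs_pos (q - xm)). assert (P6 := Rabs_pos (hp - hq)).
  assert (E1 : Rabs hp * Rabs (p - q) * Rabs (p - xp + (q - xm)) <= B0 * 2 * K * Rabs (p - q)).
  { replace (B0 * 2 * K * Rabs (p - q)) with (B0 * Rabs (p - q) * (2 * K)) by ring.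
    apply Rmult_le_compat; try nra. }
  assert (E2 : Rabs (hp - hq) * (Rabs (q - xp) * Rabs (q - xm)) <= B1 * K * K * Rabs (p - q)).
  { replace (B1 * K * K * Rabs (p - q)) with (B1 * Rabs (p - q) * (K * K)) by ring.
    apply Rmult_le_compat; try nra. }
  lra.
Qed.

Lemma F_bound (hp p xp xm K B0 : R) :
  xm <= p <= xp -> xp - xm <= K -> Rabs hp <= B0 ->
  Rabs (1/2 * hp * (p - xp) * (p - xm)) <= 1/2 * B0 * K * K.
Proof.
  intros Hp HK HB.
  rewrite !Rabs_mult. rewrite (Rabs_right (1/2)) by lra.
  assert (A2 : Rabs (p - xp) <= K) by (apply Rabs_le; lra).
  assert (A3 : Rabs (p - xm) <= K) by (apply Rabs_le; lra).
  assert (P1 := Rabs_pos hp). assert (P4 := Rabs_pos (p - xp)). assert (P5 := Rabs_pos (p - xm)).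
  replace (1/2 * B0 * K * K) with (1/2 * B0 * K * K) by ring.
  apply Rmult_le_compat; try nra.
Qed.

Lemma lip_from_deriv (f : R -> R) c d B :
  (forall x, c <= x <= d -> ex_derive f x) ->
  (forall x, c <= x <= d -> Rabs (Derive f x) <= B) ->
  forall x y, c <= x <= d -> c <= y <= d -> Rabs (f x - f y) <= B * Rabs (x - y).
Proof.
  intros Hd HB x y Hx Hy.
  destruct (MVT_gen f y x (Derive f)) as [z [Hz Heq]].
  - intros t Ht. apply Derive_correct. apply Hd.
    assert (Rmin y x >= c) by (unfold Rmin; destruct (Rle_dec y x); lra).
    assert (Rmax y x <= d) by (unfold Rmax; destruct (Rle_dec y x); lra). lra.
  - intros t Ht. apply continuity_pt_filterlim. apply (ex_derive_continuous (V:=R_NormedModule)).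
    apply Hd.
    assert (Rmin y x >= c) by (unfold Rmin; destruct (Rle_dec y x); lra).
    assert (Rmax y x <= d) by (unfold Rmax; destruct (Rle_dec y x); lra). lra.
  - rewrite Heq, Rabs_mult. apply Rmult_le_compat_r. apply Rabs_pos. apply HB.
    assert (Rmin y x >= c) by (unfold Rmin; destruct (Rle_dec y x); lra).
    assert (Rmax y x <= d) by (unfold Rmax; destruct (Rle_dec y x); lra). lra.
Qed.

Lemma key_ineq (a b xp xm hb ha hc ep em eta L : R) :
  0 <= a -> a < b -> b <= xp -> xm <= 0 -> 0 < hc -> 0 < eta -> eta <= ep / 2 -> eta <= em ->
  Rabs (hb - hc) <= eta * hc -> Rabs (hb - ha) <= L * (b - a) -> 0 <= L ->
  L * (xp - xm) <= hc * ep / 2 -> 0 < hb ->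
  0 <= (1/2 * hb * (b - xp) * (b - xm) - 1/2 * ha * (a - xp) * (a - xm)) +
       hc / 2 * ((1 + ep) * xp + (1 - em) * xm) * (b - a).
Proof.
  intros Ha Hab Hb Hxm Hhc Heta Hep Hem Hh HL HL0 Hs hbpos.
  pose (d := b - a).
  apply Rabs_le_between in Hh. apply Rabs_le_between in HL.
  assert (Hd : 0 < d) by (unfold d; lra).
  replace ((1/2 * hb * (b - xp) * (b - xm) - 1/2 * ha * (a - xp) * (a - xm)) +
       hc / 2 * ((1 + ep) * xp + (1 - em) * xm) * (b - a)) with
    (1/2 * (hb * d * (a + b - xp - xm) + (hb - ha) * ((a - xp) * (a - xm)) +
            hc * ((1 + ep) * xp + (1 - em) * xm) * d)) by (unfold d; field).
  assert (T1 : hb * d * (a + b - xp - xm) >= hb * d * (- xp) + hb * d * (- xm)).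
  { assert (0 <= hb * d * (a + b)) by (apply Rmult_le_pos; nra). nra. }
  assert (T1a : hb * d * (- xp) >= - (hc * (1 + eta)) * xp * d).
  { assert (0 <= xp) by lra. assert (0 <= d * xp) by nra. nra. }
  assert (T1b : hb * d * (- xm) >= hc * (1 - eta) * (- xm) * d).
  { assert (0 <= d * (- xm)) by nra. nra. }
  assert (P : 0 <= (xp - a) * (a - xm) <= xp * (xp - xm)).
  { split. nra. assert (0 <= a - xm) by lra. assert (a - xm <= xp - xm) by lra.
    assert (xp - a <= xp) by lra. assert (0 <= xp - a) by lra. nra. }
  assert (T2 : (hb - ha) * ((a - xp) * (a - xm)) >= - (L * d) * (xp * (xp - xm))).
  { replace ((a - xp) * (a - xm)) with (- ((xp - a) * (a - xm))) by ring.
    destruct P as [P1 P2].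
    assert (Rabs ((hb - ha) * (- ((xp - a) * (a - xm)))) <= L * d * (xp * (xp - xm))).
    { rewrite Rabs_mult, Rabs_Ropp, (Rabs_right ((xp - a) * (a - xm))) by lra.
      apply Rmult_le_compat; try lra. apply Rabs_pos. apply Rabs_le; unfold d; lra. }
    apply Rabs_le_between in H. lra. }
  assert (T3 : L * d * (xp * (xp - xm)) <= d * xp * (hc * ep / 2)).
  { replace (L * d * (xp * (xp - xm))) with (d * xp * (L * (xp - xm))) by ring.
    apply Rmult_le_compat_l; [|lra]. assert (0 <= xp) by lra. nra. }
  assert (T4 : 0 <= d * xp * hc * (ep / 2 - eta) + d * (- xm) * hc * (em - eta)).
  { assert (0 <= xp) by lra. apply Rplus_le_le_0_compat.
    repeat apply Rmult_le_pos; nra. repeat apply Rmult_le_pos; nra. }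
  nra.
Qed.


Lemma lim_pinf (f : R -> R) (l : R) : is_lim f p_infty l -> forall eps, 0 < eps ->
  exists M, forall x, M < x -> Rabs (f x - l) < eps.
Proof.
  intros H eps He. apply is_lim_spec in H. unfold is_lim' in H. destruct (H (mkposreal eps He)) as [M HM]. exists M. exact HM.
Qed.

Theorem proposition3
  (rc : R) (h : R -> R -> R) (xp xm dxp dxm Xp Xm : R -> R)
  (hinf : R -> R) (hc eps_p eps_m : R)
  (* r_c > 0 and the geometric setting: 0 < r_- < r_+ *)
  (Hrc : 0 < rc)
  (Hxm_pos : forall v, - rc < xm v)
  (Horder : forall v, xm v < xp v)
  (* h = A F > 0 on the spacetime (r > 0) *)
  (Hh_pos : forall v x, - rc < x -> 0 < h v x)
  (* regularity of h: smooth in x, h and dh/dx jointly continuous *)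
  (Hh_smooth : forall n v x, - rc < x -> ex_derive_n (h v) n x)
  (Hh_cont : forall v x, - rc < x ->
     continuous (fun p : R * R => h (fst p) (snd p)) (v, x))
  (Hdh_cont : forall v x, - rc < x ->
     continuous (fun p : R * R => Derive (h (fst p)) (snd p)) (v, x))
  (* the v -> oo limit of h is a smooth function hinf of x, and all
     x-derivatives of h converge (uniformly near x = 0) to those of hinf *)
  (Hhinf_smooth : forall n x, - rc < x -> ex_derive_n hinf n x)
  (Hh_conv : exists delta, 0 < delta /\ delta < rc /\
     forall (n : nat) (eps : R), 0 < eps -> exists V : R, forall v x,
       V <= v -> Rabs x <= delta ->
       Rabs (Derive_n (h v) n x - Derive_n hinf n x) < eps)
  (Hhc : hc = hinf 0)
  (Hhc_pos : 0 < hc)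
  (* dynamics of the horizons: d r_+/dv < 0, Case 2: d r_-/dv > 0 *)
  (Hdxp : forall v, is_derive xp v (dxp v))
  (Hdxp_neg : forall v, dxp v < 0)
  (Hdxm : forall v, is_derive xm v (dxm v))
  (Hdxm_pos : forall v, 0 < dxm v)
  (* r_pm -> r_c *)
  (Hxp_lim : is_lim xp p_infty 0)
  (Hxm_lim : is_lim xm p_infty 0)
  (* X_pm primitives of x_pm *)
  (HXp : forall v, is_derive Xp v (xp v))
  (HXm : forall v, is_derive Xm v (xm v))
  (* the hypothesis of the proposition *)
  (Heps_p : 0 < eps_p) (Heps_m : 0 < eps_m)
  (Hlim : is_lim
     (fun v => xp v * exp (hc / 2 * ((1 + eps_p) * Xp v + (1 - eps_m) * Xm v)))
     p_infty 0) :
  type1 h xp xm.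
Proof.
  assert (Hxpc : forall v, continuous xp v) by (intros v; exact (is_derive_cont _ _ _ (Hdxp v))).
  assert (Hxmc : forall v, continuous xm v) by (intros v; exact (is_derive_cont _ _ _ (Hdxm v))).
  assert (Hxp_dec : forall a b, a <= b -> xp b <= xp a).
  { intros a b Hab. apply (nonincr xp dxp a b Hab). intros; apply Hdxp. intros t _; left; apply Hdxp_neg. }
  assert (Hxm_inc : forall a b, a <= b -> xm a <= xm b).
  { intros a b Hab. apply (nondecr xm dxm a b Hab). intros; apply Hdxm. intros t _; left; apply Hdxm_pos. }
  assert (Hxp_nn : forall v, 0 <= xp v).
  { intros v. destruct (Rle_dec 0 (xp v)) as [|Hn]; auto. exfalso.
    destruct (lim_pinf xp 0 Hxp_lim (- xp v) ltac:(lra)) as [M HM].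
    set (w := Rmax M v + 1).
    assert (M < w) by (unfold w; generalize (Rmax_l M v); lra).
    assert (v <= w) by (unfold w; generalize (Rmax_r M v); lra).
    specialize (HM w H). specialize (Hxp_dec v w H0). rewrite Rminus_0_r in HM.
    apply Rabs_def2 in HM. lra. }
  assert (Hxm_np : forall v, xm v <= 0).
  { intros v. destruct (Rle_dec (xm v) 0) as [|Hn]; auto. exfalso.
    destruct (lim_pinf xm 0 Hxm_lim (xm v) ltac:(lra)) as [M HM].
    set (w := Rmax M v + 1).
    assert (M < w) by (unfold w; generalize (Rmax_l M v); lra).
    assert (v <= w) by (unfold w; generalize (Rmax_r M v); lra).
    specialize (HM w H). specialize (Hxm_inc v w H0). rewrite Rminus_0_r in HM.
    apply Rabs_def2 in HM. lra. }
  assert (Hord : forall v, xm v <= xp v) by (intros v; left; apply Horder).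
  assert (HB : forall a b, a <= b -> exists B0 B1, 0 <= B1 /\ forall v x, a <= v <= b ->
            xm a <= x <= xp a -> Rabs (h v x) <= B0 /\ Rabs (Derive (h v) x) <= B1).
  { intros a b Hab.
    destruct (box_bound h a b (xm a) (xp a) Hab (Hord a)) as [B0 HB0].
    { intros v x _ Hx. apply Hh_cont. generalize (Hxm_pos a). lra. }
    destruct (box_bound (fun v x => Derive (h v) x) a b (xm a) (xp a) Hab (Hord a)) as [B1 HB1].
    { intros v x _ Hx. apply (Hdh_cont v x). generalize (Hxm_pos a). lra. }
    exists B0, (Rabs B1). split. apply Rabs_pos. intros v x Hv Hx. split. apply HB0; auto.
    apply Rle_trans with B1. apply (HB1 v x Hv Hx). apply Rle_abs. }
  assert (Hhder : forall v x, - rc < x -> ex_derive (h v) x).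
  { intros v x Hx. exact (Hh_smooth 1%nat v x Hx). }
  set (G := Ft h xp xm).
  assert (FtL : forall a b, a <= b -> exists M L, 0 <= M /\ 0 <= L /\ forall v, a <= v <= b ->
            forall x y, Rabs (G v x) <= M /\ Rabs (G v x - G v y) <= L * Rabs (x - y)).
  { intros a b Hab. destruct (HB a b Hab) as [B0 [B1 [HB1p HB01]]].
    set (K := xp a - xm a).
    exists (Rabs (1/2 * B0 * K * K)), (1/2 * (B0 * 2 * K + B1 * K * K) + Rabs (1/2 * (B0 * 2 * K + B1 * K * K))).
    split. apply Rabs_pos. split.
    { assert (H := Rabs_pos (1/2 * (B0 * 2 * K + B1 * K * K))).
      assert (H' := Rle_abs (- (1/2 * (B0 * 2 * K + B1 * K * K)))). rewrite Rabs_Ropp in H'. lra. }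
    intros v Hv x y.
    assert (Hin : forall z, xm v <= z <= xp v -> xm a <= z <= xp a).
    { intros z Hz. split. apply Rle_trans with (xm v). apply Hxm_inc; lra. lra.
      apply Rle_trans with (xp v). lra. apply Hxp_dec; lra. }
    assert (HKv : xp v - xm v <= K).
    { unfold K. assert (xp v <= xp a) by (apply Hxp_dec; lra). assert (xm a <= xm v) by (apply Hxm_inc; lra). lra. }
    set (p := clamp xp xm v x). set (q := clamp xp xm v y).
    assert (Hp : xm v <= p <= xp v) by (apply clamp_in; auto).
    assert (Hq : xm v <= q <= xp v) by (apply clamp_in; auto).
    split.
    - apply Rle_trans with (2 := Rle_abs _). unfold G, Ft. fold p.
      apply (F_bound _ p (xp v) (xm v) K B0); auto. apply (HB01 v p Hv (Hin p Hp)).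
    - unfold G, Ft. fold p q.
      assert (Hlip : Rabs (h v p - h v q) <= B1 * Rabs (p - q)).
      { apply (lip_from_deriv (h v) (xm a) (xp a) B1).
        - intros z Hz. apply Hhder. generalize (Hxm_pos a). lra.
        - intros z Hz. apply (HB01 v z Hv Hz).
        - apply Hin; auto.
        - apply Hin; auto. }
      apply Rle_trans with (1/2 * (B0 * 2 * K + B1 * K * K) * Rabs (p - q)).
      + apply F_diff_bound; auto. apply (HB01 v p Hv (Hin p Hp)).
      + assert (Hc := clamp_lip xp xm v x y (Hord v)). fold p q in Hc.
        assert (H0 := Rabs_pos (p - q)).
        assert (H1 := Rle_abs (1/2 * (B0 * 2 * K + B1 * K * K))).
        assert (H2 := Rabs_pos (1/2 * (B0 * 2 * K + B1 * K * K))).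
        assert (H3 : 0 <= 1/2 * (B0 * 2 * K + B1 * K * K) + Rabs (1/2 * (B0 * 2 * K + B1 * K * K))).
        { assert (H' := Rle_abs (- (1/2 * (B0 * 2 * K + B1 * K * K)))). rewrite Rabs_Ropp in H'. lra. }
        apply Rle_trans with ((1/2 * (B0 * 2 * K + B1 * K * K) + Rabs (1/2 * (B0 * 2 * K + B1 * K * K))) * Rabs (p - q)).
        nra. apply Rmult_le_compat_l; auto. }
  assert (FtPic : forall N, 0 <= N -> exists M L, 0 <= M /\ 0 <= L /\ forall v, Rabs v <= N ->
            forall x y, Rabs (G v x) <= M /\ Rabs (G v x - G v y) <= L * Rabs (x - y)).
  { intros N HN. destruct (FtL (- N) N ltac:(lra)) as [M [L [HM [HL H]]]].
    exists M, L. split; auto. split; auto. intros v Hv. apply H. apply Rabs_le_between in Hv. lra. }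
  assert (FtC : forall phi : R -> R, (forall s, continuous phi s) ->
            forall s, continuous (fun s => G s (phi s)) s).
  { intros phi Hphi s.
    set (c := fun s => clamp xp xm s (phi s)).
    assert (Hcc : continuous c s).
    { unfold c, clamp. apply cont_Rmax. apply Hxmc. apply cont_Rmin. apply Hxpc. apply Hphi. }
    assert (Hhc' : continuous (fun s => h s (c s)) s).
    { apply (continuous_comp_2 (fun s => s) c h). apply continuous_id. exact Hcc.
      apply Hh_cont. generalize (clamp_in xp xm s (phi s) (Hord s)) (Hxm_pos s). unfold c. lra. }
    apply continuity_pt_filterlim. unfold G, Ft. fold (c s).
    apply continuity_pt_filterlim in Hcc, Hhc'.
    assert (H1 := continuity_pt_filterlim xp s). assert (H2 := continuity_pt_filterlim xm s).
    apply continuity_pt_mult. apply continuity_pt_mult. apply continuity_pt_mult.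
    apply continuity_pt_const. intros a b; reflexivity. exact Hhc'.
    apply continuity_pt_minus. exact Hcc. apply H1, Hxpc.
    apply continuity_pt_minus. exact Hcc. apply H2, Hxmc. }
  assert (Ft_eq : forall v x, xm v <= x <= xp v -> G v x = 1/2 * h v x * (x - xp v) * (x - xm v)).
  { intros v x Hx. unfold G, Ft. rewrite clamp_id; auto. }
  assert (Ft_hi : forall v x, xp v <= x -> G v x = 0).
  { intros v x Hx. unfold G, Ft. rewrite clamp_hi; auto. ring. }
  assert (Ft_lo : forall v x, x <= xm v -> G v x = 0).
  { intros v x Hx. unfold G, Ft. rewrite clamp_lo; auto. ring. }
  assert (Hex : forall y, exists phi : R -> R, phi 0 = y /\ forall v, is_derive phi v (G v (phi v))).
  { intros y. apply picard; auto. }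
  set (sol := fun y => proj1_sig (constructive_indefinite_description _ (Hex y))).
  assert (Hsol : forall y, sol y 0 = y /\ forall v, is_derive (sol y) v (G v (sol y v))).
  { intros y. unfold sol. destruct (constructive_indefinite_description _ (Hex y)) as [phi Hphi].
    exact Hphi. }
  assert (Bp : forall g : R -> R, (forall v, is_derive g v (G v (g v))) ->
            forall a b, a < b -> xp a <= g a -> xp b < g b).
  { intros g Hg a b Hab Ha.
    cut (0 < g b - xp b). lra.
    apply (barrier (fun t => g t - xp t) (fun t => G t (g t) - dxp t) a b); auto.
    - intros t. apply (is_derive_minus g xp). apply Hg. apply Hdxp.
    - intros t Ht. rewrite Ft_hi by lra. generalize (Hdxp_neg t). lra.
    - lra. }
  assert (Bm : forall g : R -> R, (forall v, is_derive g v (G v (g v))) ->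
            forall a b, a < b -> g a <= xm a -> g b < xm b).
  { intros g Hg a b Hab Ha.
    cut (0 < xm b - g b). lra.
    apply (barrier (fun t => xm t - g t) (fun t => dxm t - G t (g t)) a b); auto.
    - intros t. apply (is_derive_minus xm g). apply Hdxm. apply Hg.
    - intros t Ht. rewrite Ft_lo by lra. generalize (Hdxm_pos t). lra.
    - lra. }
  assert (Gron : forall a b, a <= b -> exists L, 0 <= L /\ forall g1 g2 : R -> R,
            (forall v, is_derive g1 v (G v (g1 v))) -> (forall v, is_derive g2 v (G v (g2 v))) ->
            (g1 b - g2 b)^2 <= (g1 a - g2 a)^2 * exp (2 * L * (b - a)) /\
            (g1 a - g2 a)^2 <= (g1 b - g2 b)^2 * exp (2 * L * (b - a))).
  { intros a b Hab. destruct (FtL a b Hab) as [M [L [HM [HL HML]]]].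
    exists L. split; auto. intros g1 g2 H1 H2.
    apply (gronwall (fun t => g1 t - g2 t) (fun t => G t (g1 t) - G t (g2 t)) L a b HL Hab).
    - intros t _. apply (is_derive_minus g1 g2); auto.
    - intros t Ht. apply (HML t Ht). }
  assert (Hclose : forall y v1, 0 <= v1 -> forall gap, 0 < gap -> exists dl, 0 < dl /\
            forall y', Rabs (y' - y) < dl -> Rabs (sol y' v1 - sol y v1) < gap).
  { intros y v1 Hv1 gap Hgap. destruct (Gron 0 v1 Hv1) as [L [HL HG]].
    set (E := exp (L * v1)). assert (HE : 0 < E) by apply exp_pos.
    exists (gap / E). split. apply Rdiv_lt_0_compat; auto.
    intros y' Hy'.
    destruct (HG (sol y') (sol y) (proj2 (Hsol y')) (proj2 (Hsol y))) as [H1 _].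
    rewrite (proj1 (Hsol y')), (proj1 (Hsol y)) in H1.
    replace (exp (2 * L * (v1 - 0))) with (E * E) in H1
      by (unfold E; rewrite <- exp_plus; f_equal; ring).
    assert (Habs : Rabs (y' - y) * E < gap).
    { apply Rmult_lt_reg_r with (/ E). apply Rinv_0_lt_compat; auto.
      rewrite Rmult_assoc, Rinv_r by lra. rewrite Rmult_1_r. exact Hy'. }
    assert (Hsq : (sol y' v1 - sol y v1)^2 < gap^2).
    { apply Rle_lt_trans with (1 := H1).
      replace ((y' - y)^2 * (E * E)) with ((Rabs (y' - y) * E)^2)
        by (rewrite Rpow_mult_distr, pow2_abs; ring).
      assert (0 <= Rabs (y' - y) * E) by (apply Rmult_le_pos; [apply Rabs_pos|lra]).
      nra. }
    apply Rabs_lt_between'. split; nra. }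
  set (Em := fun y => exists v, 0 <= v /\ sol y v < xm v).
  set (Ep := fun y => exists v, 0 <= v /\ xp v < sol y v).
  assert (HEm0 : Em (xm 0)).
  { exists 1. split. lra. apply (Bm (sol (xm 0)) (proj2 (Hsol _)) 0 1). lra.
    rewrite (proj1 (Hsol _)). lra. }
  assert (HEp0 : Ep (xp 0)).
  { exists 1. split. lra. apply (Bp (sol (xp 0)) (proj2 (Hsol _)) 0 1). lra.
    rewrite (proj1 (Hsol _)). lra. }
  assert (Hdisj : forall y, Em y -> Ep y -> False).
  { intros y [v1 [Hv1 H1]] [v2 [Hv2 H2]].
    destruct (Rtotal_order v1 v2) as [Hlt|[Heq|Hgt]].
    - assert (sol y v2 < xm v2) by (apply (Bm _ (proj2 (Hsol y)) v1 v2); lra).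
      generalize (Hord v2). lra.
    - subst. generalize (Hord v2). lra.
    - assert (xp v1 < sol y v1) by (apply (Bp _ (proj2 (Hsol y)) v2 v1); lra).
      generalize (Hord v1). lra. }
  assert (Hopm : forall y, Em y -> exists dl, 0 < dl /\ forall y', Rabs (y' - y) < dl -> Em y').
  { intros y [v1 [Hv1 H1]].
    destruct (Hclose y v1 Hv1 (xm v1 - sol y v1) ltac:(lra)) as [dl [Hdl Hc]].
    exists dl. split; auto. intros y' Hy'. exists v1. split; auto.
    specialize (Hc y' Hy'). apply Rabs_def2 in Hc. lra. }
  assert (Hopp : forall y, Ep y -> exists dl, 0 < dl /\ forall y', Rabs (y' - y) < dl -> Ep y').
  { intros y [v1 [Hv1 H1]].
    destruct (Hclose y v1 Hv1 (sol y v1 - xp v1) ltac:(lra)) as [dl [Hdl Hc]].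
    exists dl. split; auto. intros y' Hy'. exists v1. split; auto.
    specialize (Hc y' Hy'). apply Rabs_def2 in Hc. lra. }
  set (S := fun y => xm 0 <= y <= xp 0 /\ Em y).
  assert (HS0 : S (xm 0)) by (split; [generalize (Hord 0); lra | exact HEm0]).
  assert (HSb : bound S) by (exists (xp 0); intros y [Hy _]; lra).
  destruct (completeness S HSb (ex_intro _ _ HS0)) as [ys Hys].
  assert (Hys1 : xm 0 <= ys) by (apply (proj1 Hys); exact HS0).
  assert (Hys2 : ys <= xp 0) by (apply (proj2 Hys); intros y [Hy _]; lra).
  assert (HnEm : ~ Em ys).
  { intros Hm. destruct (Hopm ys Hm) as [dl [Hdl Hd]].
    destruct (Req_dec ys (xp 0)) as [Heq|Hne].
    - rewrite Heq in Hm. exact (Hdisj _ Hm HEp0).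
    - set (y' := Rmin (ys + dl/2) (xp 0)).
      assert (ys < y') by (unfold y'; apply Rmin_glb_lt; lra).
      assert (y' <= ys + dl/2) by apply Rmin_l. assert (y' <= xp 0) by apply Rmin_r.
      assert (S y'). { split. lra. apply Hd. apply Rabs_def1; lra. }
      assert (y' <= ys) by (apply (proj1 Hys); auto). lra. }
  assert (HnEp : ~ Ep ys).
  { intros Hp. destruct (Hopp ys Hp) as [dl [Hdl Hd]].
    destruct (Req_dec ys (xm 0)) as [Heq|Hne].
    - rewrite Heq in Hp. exact (Hdisj _ HEm0 Hp).
    - destruct (not_ub_exists S ys (ys - dl/2) Hys) as [y' [[Hy' Hm] Hgt]]. lra.
      assert (y' <= ys) by (apply (proj1 Hys); split; auto).
      apply (Hdisj y' Hm). apply Hd. apply Rabs_def1; lra. }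
  set (g := sol ys).
  assert (Hg : forall v, is_derive g v (G v (g v))) by apply (proj2 (Hsol ys)).
  assert (Hgb : forall v, xm v < g v < xp v).
  { intros v. set (w := Rmax v 0 + 1).
    assert (v < w) by (unfold w; generalize (Rmax_l v 0); lra).
    assert (0 <= w) by (unfold w; generalize (Rmax_r v 0); lra).
    split.
    - destruct (Rlt_dec (xm v) (g v)) as [|Hn]; auto. exfalso. apply HnEm.
      exists w. split; auto. apply (Bm g Hg v w); lra.
    - destruct (Rlt_dec (g v) (xp v)) as [|Hn]; auto. exfalso. apply HnEp.
      exists w. split; auto. apply (Bp g Hg v w); lra. }
  assert (Hgode : outgoing_null_geodesic h xp xm g).
  { intros v. rewrite <- Ft_eq. apply Hg. generalize (Hgb v); lra. }
  assert (Hode_G : forall g1 : R -> R, outgoing_null_geodesic h xp xm g1 -> between_AHs xp xm g1 ->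
            forall v, is_derive g1 v (G v (g1 v))).
  { intros g1 O1 B1 v. rewrite Ft_eq. apply O1. generalize (B1 v); lra. }
  assert (Hdec : forall g1 : R -> R, outgoing_null_geodesic h xp xm g1 -> between_AHs xp xm g1 ->
            forall a b, a <= b -> g1 b <= g1 a).
  { intros g1 O1 B1 a b Hab. apply (nonincr g1 (fun t => 1/2 * h t (g1 t) * (g1 t - xp t) * (g1 t - xm t)) a b Hab).
    - intros t _. apply O1.
    - intros t _. specialize (B1 t).
      assert (0 < h t (g1 t)) by (apply Hh_pos; generalize (Hxm_pos t); lra).
      assert (0 < h t (g1 t) * (g1 t - xm t)) by (apply Rmult_lt_0_compat; lra).
      nra. }
  assert (Hnn : forall g1 : R -> R, outgoing_null_geodesic h xp xm g1 -> between_AHs xp xm g1 ->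
            forall v, 0 <= g1 v).
  { intros g1 O1 B1 v. destruct (Rle_dec 0 (g1 v)) as [|Hn]; auto. exfalso.
    destruct (lim_pinf xm 0 Hxm_lim (- g1 v) ltac:(lra)) as [M HM].
    set (w := Rmax M v + 1).
    assert (M < w) by (unfold w; generalize (Rmax_l M v); lra).
    assert (v <= w) by (unfold w; generalize (Rmax_r M v); lra).
    specialize (HM w H). specialize (Hdec g1 O1 B1 v w H0). specialize (B1 w).
    rewrite Rminus_0_r in HM. apply Rabs_def2 in HM. lra. }
  assert (Uniq : forall g1 g2 : R -> R,
            outgoing_null_geodesic h xp xm g1 -> between_AHs xp xm g1 ->
            outgoing_null_geodesic h xp xm g2 -> between_AHs xp xm g2 ->
            forall v0, g1 v0 < g2 v0 -> False).
  { intros g1 g2 O1 B1 O2 B2 v0 H0.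
    assert (D1 := Hode_G g1 O1 B1). assert (D2 := Hode_G g2 O2 B2).
    assert (Hpos : forall v, v0 <= v -> 0 < g2 v - g1 v).
    { intros v Hv. destruct (Rlt_dec 0 (g2 v - g1 v)) as [|Hn]; auto. exfalso.
      assert (Hcd : forall x, continuous (fun t => g2 t - g1 t) x).
      { intros x. apply (is_derive_cont _ x (G x (g2 x) - G x (g1 x))).
        apply (is_derive_minus g2 g1); auto. }
      destruct (IVT_gen_consistent (fun t => g2 t - g1 t) v0 v 0 Hcd) as [t [Ht Hft]].
      { rewrite Rmin_right by lra. rewrite Rmax_left by lra. lra. }
      rewrite Rmin_left in Ht by lra. rewrite Rmax_right in Ht by lra.
      destruct (Gron v0 t (proj1 Ht)) as [L [HL HG]].
      destruct (HG g2 g1 D2 D1) as [_ H2]. simpl in Hft. rewrite Hft in H2.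
      assert (0 < (g2 v0 - g1 v0)^2) by (apply pow_lt; lra).
      rewrite pow_ne_zero in H2 by lia. lra. }
    destruct Hh_conv as [dlt [Hdlt [Hdltrc Hconv]]].
    set (eta := Rmin eps_p eps_m / 2).
    assert (Heta : 0 < eta) by (unfold eta; assert (0 < Rmin eps_p eps_m) by (apply Rmin_glb_lt; lra); lra).
    assert (Heta_p : eta <= eps_p / 2) by (unfold eta; generalize (Rmin_l eps_p eps_m); lra).
    assert (Heta_m : eta <= eps_m) by (unfold eta; generalize (Rmin_r eps_p eps_m); lra).
    assert (Hhinfc : continuous hinf 0).
    { apply (ex_derive_continuous (V:=R_NormedModule)). exact (Hhinf_smooth 1%nat 0 ltac:(lra)). }
    destruct (cont1_eps hinf 0 (eta * hc / 2) Hhinfc ltac:(nra)) as [dl2 [Hdl2 Hc2]].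
    destruct (Hconv 0%nat (eta * hc / 2) ltac:(nra)) as [V0 HV0].
    set (dl' := Rmin dlt (dl2 / 2)).
    assert (Hdl' : 0 < dl') by (unfold dl'; apply Rmin_glb_lt; lra).
    assert (Hdl'1 : dl' <= dlt) by apply Rmin_l.
    assert (Hdl'2 : dl' <= dl2 / 2) by apply Rmin_r.
    assert (Hnear : forall v x, V0 <= v -> 0 <= x <= dl' -> Rabs (h v x - hc) <= eta * hc).
    { intros v x Hv Hx.
      assert (A1 : Rabs (h v x - hinf x) < eta * hc / 2).
      { exact (HV0 v x Hv ltac:(rewrite Rabs_right; lra)). }
      assert (A2 : Rabs (hinf x - hinf 0) < eta * hc / 2).
      { apply Hc2. rewrite Rminus_0_r, Rabs_right; lra. }
      apply Rabs_def2 in A1. apply Rabs_def2 in A2. apply Rabs_le. lra. }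
    destruct (line_bound (Derive hinf) (- dlt) dlt ltac:(lra)) as [Bd HBd].
    { intros x Hx. apply (ex_derive_continuous (V:=R_NormedModule)).
      exact (Hhinf_smooth 2%nat x ltac:(lra)). }
    assert (HBd0 : 0 <= Bd) by (apply Rle_trans with (Rabs (Derive hinf 0)); [apply Rabs_pos | apply HBd; lra]).
    destruct (Hconv 1%nat 1 ltac:(lra)) as [V1 HV1].
    set (Lp := Bd + 1).
    assert (HLp : 0 <= Lp) by (unfold Lp; lra).
    assert (Hlip : forall v x y, V1 <= v -> 0 <= x <= dl' -> 0 <= y <= dl' ->
              Rabs (h v x - h v y) <= Lp * Rabs (x - y)).
    { intros v x y Hv Hx Hy. apply (lip_from_deriv (h v) 0 dl'); auto.
      - intros z Hz. apply Hhder. lra.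
      - intros z Hz.
        assert (A : Rabs (Derive (h v) z - Derive hinf z) < 1).
        { exact (HV1 v z Hv ltac:(rewrite Rabs_right; lra)). }
        assert (B : Rabs (Derive hinf z) <= Bd) by (apply HBd; lra).
        apply Rabs_def2 in A. apply Rabs_le_between in B. apply Rabs_le. unfold Lp. lra. }
    set (sm := hc * eps_p / (2 * (Lp + 1))).
    assert (Hsm : 0 < sm) by (unfold sm; apply Rdiv_lt_0_compat; nra).
    assert (HLsm : Lp * sm <= hc * eps_p / 2).
    { unfold sm. apply Rmult_le_reg_r with (2 * (Lp + 1)). lra.
      replace (Lp * (hc * eps_p / (2 * (Lp + 1))) * (2 * (Lp + 1))) with (Lp * (hc * eps_p)) by (field; lra).
      nra. }
    destruct (lim_pinf xp 0 Hxp_lim (Rmin dl' (sm / 2)) ltac:(apply Rmin_glb_lt; lra)) as [V2 HV2].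
    destruct (lim_pinf xm 0 Hxm_lim (sm / 2) ltac:(lra)) as [V3 HV3].
    set (Vs := Rmax (Rmax v0 V0) (Rmax V1 (Rmax (V2 + 1) (V3 + 1)))).
    assert (HVs : v0 <= Vs /\ V0 <= Vs /\ V1 <= Vs /\ V2 < Vs /\ V3 < Vs).
    { unfold Vs. generalize (Rmax_l (Rmax v0 V0) (Rmax V1 (Rmax (V2 + 1) (V3 + 1))))
        (Rmax_r (Rmax v0 V0) (Rmax V1 (Rmax (V2 + 1) (V3 + 1)))) (Rmax_l v0 V0) (Rmax_r v0 V0)
        (Rmax_l V1 (Rmax (V2 + 1) (V3 + 1))) (Rmax_r V1 (Rmax (V2 + 1) (V3 + 1)))
        (Rmax_l (V2 + 1) (V3 + 1)) (Rmax_r (V2 + 1) (V3 + 1)). lra. }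
    set (Qd := fun v => hc / 2 * ((1 + eps_p) * xp v + (1 - eps_m) * xm v)).
    set (Q := fun v => hc / 2 * ((1 + eps_p) * Xp v + (1 - eps_m) * Xm v)).
    assert (Key : forall v, Vs <= v ->
              0 <= (G v (g2 v) - G v (g1 v)) + Qd v * (g2 v - g1 v)).
    { intros v Hv.
      assert (Hxpv : Rabs (xp v) < Rmin dl' (sm / 2)).
      { specialize (HV2 v ltac:(lra)). rewrite Rminus_0_r in HV2. exact HV2. }
      assert (Hxmv : Rabs (xm v) < sm / 2).
      { specialize (HV3 v ltac:(lra)). rewrite Rminus_0_r in HV3. exact HV3. }
      assert (Hm1 := Rmin_l dl' (sm / 2)). assert (Hm2 := Rmin_r dl' (sm / 2)).
      apply Rabs_def2 in Hxpv. apply Rabs_def2 in Hxmv.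
      assert (Hb1 := B1 v). assert (Hb2 := B2 v).
      assert (Hn1 := Hnn g1 O1 B1 v). assert (Hn2 := Hnn g2 O2 B2 v).
      assert (Hp := Hpos v ltac:(lra)).
      rewrite (Ft_eq v (g2 v)) by lra. rewrite (Ft_eq v (g1 v)) by lra.
      unfold Qd.
      apply (key_ineq (g1 v) (g2 v) (xp v) (xm v) (h v (g2 v)) (h v (g1 v)) hc eps_p eps_m eta Lp);
        try lra; auto.
      - apply Hnear; lra.
      - replace (g2 v - g1 v) with (Rabs (g2 v - g1 v)) by (apply Rabs_right; lra).
        apply Hlip; lra.
      - apply Rle_trans with (Lp * sm); auto. apply Rmult_le_compat_l; auto. lra.
      - apply Hh_pos. generalize (Hxm_pos v). lra. }
    set (W := fun v => (g2 v - g1 v) * exp (Q v)).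
    assert (HW : forall v, Vs <= v -> W Vs <= W v).
    { intros v Hv. apply (nondecr W (fun t => ((G t (g2 t) - G t (g1 t)) + Qd t * (g2 t - g1 t)) * exp (Q t)) Vs v Hv).
      - intros t _. unfold W, Q, Qd. auto_derive.
        + repeat split. exists (G t (g2 t)); auto. exists (G t (g1 t)); auto.
          exists (xp t); auto. exists (xm t); auto.
        + rwD (D2 t). rwD (D1 t). rwD (HXp t). rwD (HXm t). ring.
      - intros t Ht. assert (0 < exp (Q t)) by apply exp_pos. specialize (Key t ltac:(lra)). nra. }
    assert (HW0 : 0 < W Vs).
    { unfold W. apply Rmult_lt_0_compat. apply Hpos; lra. apply exp_pos. }
    destruct (lim_pinf _ 0 Hlim (W Vs) HW0) as [M HM].
    set (v := Rmax M Vs + 1).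
    assert (M < v) by (unfold v; generalize (Rmax_l M Vs); lra).
    assert (Vs <= v) by (unfold v; generalize (Rmax_r M Vs); lra).
    specialize (HM v H). rewrite Rminus_0_r in HM. apply Rabs_def2 in HM.
    specialize (HW v H1).
    assert (W v <= xp v * exp (Q v)).
    { unfold W. apply Rmult_le_compat_r. left; apply exp_pos.
      generalize (Hnn g1 O1 B1 v) (B2 v). lra. }
    unfold Q in H2. lra. }
  exists g. split. exact Hgode. split. exact Hgb.
  intros g' O' B' v.
  destruct (Rtotal_order (g' v) (g v)) as [Hlt|[Heq|Hgt]]; auto; exfalso.
  - exact (Uniq g' g O' B' Hgode Hgb v Hlt).
  - exact (Uniq g g' Hgode Hgb O' B' v Hgt).
Qed.
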